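(* Let $G$, $P$, $n$, $\alpha$, $n'$, $\zeta$, $\mathcal C_{\mathrm{pool}}$ and $P(\mathbf c)$ be as in the context. For any two codewords $\mathbf c,\mathbf c'\in\mathcal C_{\mathrm{pool}}$, $$\frac{P(\mathbf c)}{P(\mathbf c')}\le 2^{-2n\alpha\zeta\sum_{e\in E}\log_2 p(\tau(e)\mid\sigma(e))}.$$
   Context: $G=(V,E,L)$ is a deterministic, lossless, primitive labeled directed graph over a finite alphabet $\Sigma$; edge $e$ has initial vertex $\sigma(e)$, terminal vertex $\tau(e)$, label $L(e)$. $P$ is a probability mass function on $E$ with $P(e)>0$ for all $e$, stationary: with $\pi(u)=\sum_{e:\sigma(e)=u}P(e)$, $\pi(u)=\sum_{e:\tau(e)=u}P(e)$. Write $p(\tau(e)\mid\sigma(e))=P(e)/\pi(\sigma(e))$; $P_{\min}=\min_eP(e)$. $n$ is a positive integer with $nP(e)\in\mathbb Z$ for all $e$; $\alpha\in(0,1)$, $n'=\lfloor\alpha n\rfloor$, $0<\zeta<\frac{1-\alpha}{\alpha}P_{\min}$, $v_{\mathrm{root}}\in V$ fixed. $\mathcal W$ is the set of paths $\mathbf w=(e_1,\dots,e_{n'})$ with $\sigma(e_1)=v_{\mathrm{root}}$ and $|S_{\mathbf w}(e)/n'-P(e)|<\zeta$ for all $e$, where $S_{\mathbf w}(e)$ counts occurrences of $e$ in $\mathbf w$. For $\mathbf w\in\mathcal W$ ending at $v_{\mathrm{end}}$, the multigraph with $nP(e)-S_{\mathbf w}(e)>0$ copies of each $e$ has an Eulerian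 path from $v_{\mathrm{end}}$ to $v_{\mathrm{root}}$; $\Phi(\mathbf w)$ is the lexicographically first. $\mathcal C_{\mathrm{pool}}=\{L(\mathbf w\|\Phi(\mathbf w)):\mathbf w\in\mathcal W\}$; each codeword $\mathbf c$ has a unique prefix $\mathbf w$, and $P(\mathbf c)=\prod_{i=1}^{n'}p(\tau(e_i)\mid\sigma(e_i))$, the probability that a length-$n'$ random walk governed by $P$ from $v_{\mathrm{root}}$ (choosing edge $e$ out of $u$ with probability $P(e)/\pi(u)$) equals that prefix. *)

(* Defs.v *)
From HB Require Import structures.
From mathcomp Require Import all_boot all_order all_algebra.
From mathcomp Require Import all_classical all_reals exp.
Set Implicit Arguments. Unset Strict Implicit. Unset Printing Implicit Defensive.
Import Order.TTheory GRing.Theory Num.Theory.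
Local Open Scope ring_scope.

Section Graph.
Variables (V E : finType) (d : Order.disp_t) (Sigma : finOrderType d).
Variables (sig tau : E -> V) (L : E -> Sigma).

Fixpoint walk (u : V) (s : seq E) (v : V) : bool :=
  match s with
  | [::] => u == v
  | e :: s' => (sig e == u) && walk (tau e) s' v
  end.

Definition vend (u : V) (s : seq E) : V := last u (map tau s).

Definition deterministic : Prop :=
  forall e e', sig e = sig e' -> L e = L e' -> e = e'.

Definition lossless : Prop :=
  forall u v (s t : seq E), walk u s v -> walk u t v -> map L s = map L t -> s = t.

(* primitive: some power A^k (k > 0) of the adjacency matrix is entrywise
   positive, i.e. there are walks of length k between every pair of vertices *)
Definition primitive : Prop :=
  exists k : nat, (0 < k)%N /\ forall u v, exists s : seq E, size s = k /\ walk u s v.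

Fixpoint lex_le (s t : seq Sigma) : bool :=
  match s, t with
  | [::], _ => true
  | _ :: _, [::] => false
  | x :: s', y :: t' => (x < y)%O || ((x == y) && lex_le s' t')
  end.

Variable R : realType.
Variable P : E -> R.

Definition pi_ (u : V) : R := \sum_(e | sig e == u) P e.

(* p(tau(e) | sig(e)) = P(e) / pi(sig(e)) *)
Definition pcond (e : E) : R := P e / pi_ (sig e).

Definition S_ (w : seq E) (e : E) : nat := count_mem e w.

Variables (n : nat) (alpha zeta : R) (vroot : V).

Definition n' : nat := Num.truncn (alpha * n%:R).

Definition inW (w : n'.-tuple E) : bool :=
  walk vroot w (vend vroot w) &&
  [forall e, `| (S_ w e)%:R / n'%:R - P e | < zeta].

(* t is an Eulerian path from v_end(w) to v_root of the multigraph having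
   n P(e) - S_w(e) copies of each edge e *)
Definition eulerian (w : n'.-tuple E) (t : (n - n').-tuple E) : bool :=
  walk (vend vroot w) t vroot &&
  [forall e, (S_ t e)%:R == n%:R * P e - (S_ w e)%:R].

(* Phi(w): the lexicographically first such Eulerian path (None if there is
   none, which by the context never happens for w in W) *)
Definition Phi (w : n'.-tuple E) : option ((n - n').-tuple E) :=
  [pick t | eulerian w t &&
     [forall t' : (n - n').-tuple E, eulerian w t' ==> lex_le (map L t) (map L t')]].

Definition prefix_of (w : n'.-tuple E) (c : seq Sigma) : Prop :=
  inW w /\ exists t, Phi w = Some t /\ c = map L (w ++ t).

Definition in_Cpool (c : seq Sigma) : Prop := exists w, prefix_of w c.

(* P(c) with prefix w: probability that the length-n' random walk from
   v_root equals w *)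
Definition Pprefix (w : seq E) : R := \prod_(e <- w) pcond e.

End Graph.

Arguments inW {V E} sig tau {R} P n alpha zeta vroot w.
Arguments eulerian {V E} sig tau {R} P n alpha vroot w t.
Arguments Phi {V E d Sigma} sig tau L {R} P n alpha vroot w.
Arguments prefix_of {V E d Sigma} sig tau L {R} P n alpha zeta vroot w c.

(* Main.v *)
Require Import Defs.
From HB Require Import structures.
From mathcomp Require Import all_boot all_order all_algebra.
From mathcomp Require Import all_classical all_reals exp.
Import Order.TTheory GRing.Theory Num.Theory.
Local Open Scope ring_scope.

Section Aux.
Variables (V E : finType) (sig : E -> V) (R : realType) (P : E -> R).
Hypothesis Ppos : forall e, 0 < P e.

Lemma pcond_gt0 e : 0 < pcond sig P e.
Proof.
rewrite /pcond; apply: divr_gt0 => //.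
rewrite /pi_ (bigD1 e) //=; apply: (lt_le_trans (Ppos e)); rewrite lerDl.
by apply: sumr_ge0 => i _; exact: ltW.
Qed.

Lemma pcond_le1 e : pcond sig P e <= 1.
Proof.
have hpi : 0 < pi_ sig P (sig e).
  rewrite /pi_ (bigD1 e) //=; apply: (lt_le_trans (Ppos e)); rewrite lerDl.
  by apply: sumr_ge0 => i _; exact: ltW.
rewrite /pcond ler_pdivrMr // mul1r /pi_ (bigD1 e) //= lerDl.
by apply: sumr_ge0 => i _; exact: ltW.
Qed.

Lemma lnPprefix (w : seq E) :
  0 < Pprefix sig P w /\
  ln (Pprefix sig P w) = \sum_e (S_ w e)%:R * ln (pcond sig P e).
Proof.
elim: w => [|x w [IH1 IH2]].
  rewrite /Pprefix big_nil ln1; split => //.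
  by rewrite big1 // => e _; rewrite /S_ /= mul0r.
rewrite /Pprefix big_cons -/(Pprefix sig P w).
split; first by rewrite mulr_gt0 // pcond_gt0.
rewrite lnM ?posrE ?pcond_gt0 // IH2.
have -> : \sum_e (S_ (x :: w) e)%:R * ln (pcond sig P e) =
   \sum_e ((x == e)%:R * ln (pcond sig P e) + (S_ w e)%:R * ln (pcond sig P e)).
  by apply: eq_bigr => e _; rewrite /S_ /= natrD mulrDl.
rewrite big_split /=; congr (_ + _).
rewrite (bigD1 x) //= eqxx mul1r big1 ?addr0 // => e /negbTE.
by rewrite eq_sym => ->; rewrite mul0r.
Qed.

End Aux.

Theorem claim1 (V E : finType) (d : Order.disp_t) (Sigma : finOrderType d)
  (sig tau : E -> V) (L : E -> Sigma) (R : realType) (P : E -> R)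
  (n : nat) (alpha zeta : R) (vroot : V) :
  deterministic sig L -> lossless sig tau L -> primitive sig tau ->
  (forall e, 0 < P e) -> \sum_e P e = 1 ->
  (forall u, \sum_(e | sig e == u) P e = \sum_(e | tau e == u) P e) ->
  (0 < n)%N -> (forall e, exists k : nat, n%:R * P e = k%:R) ->
  0 < alpha < 1 ->
  0 < zeta -> (forall e, zeta < (1 - alpha) / alpha * P e) ->
  forall c c' : seq Sigma,
    in_Cpool sig tau L P n alpha zeta vroot c ->
    in_Cpool sig tau L P n alpha zeta vroot c' ->
  forall w w',
    prefix_of sig tau L P n alpha zeta vroot w c ->
    prefix_of sig tau L P n alpha zeta vroot w' c' ->
    Pprefix sig P w / Pprefix sig P w'
      <= 2 `^ (- (2 * n%:R * alpha * zeta *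
                  \sum_e (ln (pcond sig P e) / ln 2))).
Proof.
move=> _ _ _ Ppos _ _ _ _ /andP[a0 a1] z0 _ c c' _ _ w w' [hw _] [hw' _].
have [Pw lnw] := @lnPprefix _ _ sig R P Ppos w.
have [Pw' lnw'] := @lnPprefix _ _ sig R P Ppos w'.
have ln2 : 0 < ln (2 : R) by apply: ln_gt0; rewrite ltr1n.
set N : R := (n' n alpha)%:R.
have Nle : N <= n%:R * alpha.
  by rewrite /N /n' mulrC truncn_le mulr_ge0 // ltW.
have Sbound : forall (u : (n' n alpha).-tuple E), inW sig tau P n alpha zeta vroot u ->
    forall e, `|(S_ u e)%:R - N * P e| <= N * zeta.
  move=> u /andP[_ /forallP hu] e.
  have := hu e.
  have [N0|Npos] := eqVneq N 0.
    move=> _.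
    have S0 : S_ u e = 0%N.
      apply/eqP; rewrite -leqn0 /S_; apply: leq_trans (count_size _ _) _.
      by rewrite size_tuple; move: N0; rewrite /N => /eqP; rewrite pnatr_eq0 => /eqP ->.
    by rewrite N0 S0 !mul0r subr0 normr0.
  have Ngt : 0 < N by rewrite lt_def Npos /N ler0n.
  move=> /ltW h.
  have -> : (S_ u e)%:R - N * P e = N * ((S_ u e)%:R / N - P e).
    by rewrite mulrBr mulrCA divff // mulr1.
  by rewrite normrM (gtr0_norm Ngt); apply: ler_wpM2l => //; exact: ltW.
have D : forall e, `|(S_ w e)%:R - (S_ w' e)%:R| <= 2 * n%:R * alpha * zeta :> R.
  move=> e.
  have -> : (S_ w e)%:R - (S_ w' e)%:R = ((S_ w e)%:R - N * P e) - ((S_ w' e)%:R - N * P e) :> R.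
    by rewrite opprB addrA subrK.
  apply: le_trans (ler_normB _ _) _.
  apply: le_trans (lerD (Sbound _ hw e) (Sbound _ hw' e)) _.
  have h : N * zeta <= n%:R * alpha * zeta by exact: (ler_wpM2r (ltW z0) Nle).
  by apply: le_trans (lerD h h) _; rewrite -!mulrA (mulr_natl _ 2) mulr2n !mulrA.
rewrite -ler_ln ?posrE ?divr_gt0 ?powR_gt0 // ln_powR lnM ?posrE ?invr_gt0 //.
rewrite lnV ?posrE // lnw lnw' -sumrB.
set K := 2 * n%:R * alpha * zeta.
rewrite mulNr -mulrA mulr_suml.
under [X in _ <= - (_ * X)]eq_bigr => e _ do rewrite divfK ?gt_eqF //.
rewrite -mulrN -sumrN mulr_sumr; apply: ler_sum => e _.
rewrite -mulrBl.
have l0 : ln (pcond sig P e) <= 0 by apply: ln_le0; exact: pcond_le1.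
apply: le_trans (ler_norm _) _.
rewrite normrM (ler0_norm l0); apply: ler_wpM2r => //; by rewrite oppr_ge0.
Qed.
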